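(* Let $V$ be a vector configuration and $W\subseteq V$ a subconfiguration such that $\operatorname{lin}(W)\cap V=W$. Then the following three equalities are equivalent: (i) $\mathrm{DD}(V)=\mathrm{DD}(W)+\mathrm{DD}(V/W)$; (ii) $\deg^*(V)=\deg^*(W)+\deg^*(V/W)$; (iii) $\operatorname{codeg}^*(V)=\operatorname{codeg}^*(W)+\operatorname{codeg}^*(V/W)$.
   Context: A vector configuration is a finite family (repetitions allowed) $U$ of vectors in a real vector space $E$; a subconfiguration is a subfamily, $\operatorname{rank}(U)=\dim\operatorname{lin}(U)$, cardinalities count multiplicities. The quotient $V/W$ is the configuration in $E/\operatorname{lin}(W)$ of the images of the elements of $V\setminus W$. For a nonzero linear functional $f$ on $E$, the oriented linear hyperplane $H=\{f=0\}$ has $H^+=\{f>0\}$, $\overline{H}^-=\{f\le0\}$. Dual codegree: $\operatorname{codeg}^*(U)=\min_H|\overline{H}^-\cap U|$; dual degree: $\deg^*(U)=\max_H|H^+\cap U|-\operatorname{rank}(U)$, over oriented linear hyperplanes $H$. Covector discrepancy: $\mathrm{DD}(U)=\max_f\big|\,|\{u: f(u)>0\}|-|\{u:f(u)<0\}|\,\big|$ over all linear functionals $f$. *)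

(* Defs.v *)
From HB Require Import structures.
From mathcomp Require Import all_boot all_order all_algebra.
From mathcomp Require Import boolp reals.
Set Implicit Arguments. Unset Strict Implicit. Unset Printing Implicit Defensive.
Import Order.TTheory GRing.Theory Num.Theory.
Local Open Scope ring_scope.

(* A vector configuration in E = R^n (row vectors 'rV[R]_n) is a finite family
   indexed by a subset A of a finite index type I:  (A, U) with U : I -> 'rV_n;
   repetitions are allowed since U need not be injective, and all cardinalities
   are cardinalities of index sets, i.e. count multiplicities. *)

Section Config.
Variables (R : realType) (n : nat) (I : finType).
Implicit Types (A : {set I}) (U : I -> 'rV[R]_n) (c : 'cV[R]_n).

Definition fval c (u : 'rV[R]_n) : R := (u *m c) 0 0.

(* lin(U) as a (square) matrix whose row space is the span *)
Definition clin A U : 'M[R]_n := (\sum_(i in A) <<U i>>)%MS.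
Definition crank A U : nat := \rank (clin A U).

Definition npos c A U : nat := #|[set i in A | 0 < fval c (U i)]|.
Definition nneg c A U : nat := #|[set i in A | fval c (U i) < 0]|.
Definition nnonpos c A U : nat := #|[set i in A | fval c (U i) <= 0]|.

(* dual codegree: min over oriented linear hyperplanes {f = 0} (f <> 0)
   of |closed negative side ∩ U|  (fallback #|A| if there is no hyperplane,
   i.e. n = 0) *)
Definition codeg_star A U : nat :=
  \big[minn/#|A|]_(k < #|A|.+1 | `[< exists c, c != 0 /\ nnonpos c A U = k >])
     (k : nat).

Definition deg_star A U : int :=
  (\max_(k < #|A|.+1 | `[< exists c, c != 0 /\ npos c A U = k >]) (k : nat))%:Z
  - (crank A U)%:Z.

Definition DD A U : nat :=
  \max_(k < #|A|.+1 |
     `[< exists c, `|(npos c A U)%:Z - (nneg c A U)%:Z|%N = k >]) (k : nat).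

(* quotient V/W, W = (S, V): the map E -> E/lin(W) is realized concretely
   as u |-> u *m cokermx (clin S V), whose kernel is exactly lin(W)
   (mathcomp: submxE).  V/W is indexed by ~: S. *)
Definition qmap S U : 'M[R]_n := cokermx (clin S U).
Definition quot S U : I -> 'rV[R]_n := fun i => U i *m qmap S U.

End Config.

(* Main.v *)
Require Import Defs.
From HB Require Import structures.
From mathcomp Require Import all_boot all_order all_algebra.
From mathcomp Require Import boolp reals.
From mathcomp Require Import ring lra zify.
Import Order.TTheory GRing.Theory Num.Theory.
Local Open Scope ring_scope.

Section Aux.
Variables (R : realType) (n : nat) (I : finType).
Implicit Types (A : {set I}) (U : I -> 'rV[R]_n) (c : 'cV[R]_n).

Lemma fvalD c1 c2 u : fval (c1 + c2) u = fval c1 u + fval c2 u.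
Proof. by rewrite /fval mulmxDr mxE. Qed.
Lemma fvalZ a c u : fval (a *: c) u = a * fval c u.
Proof. by rewrite /fval -scalemxAr mxE. Qed.
Lemma fvalN c u : fval (- c) u = - fval c u.
Proof. by rewrite /fval mulmxN mxE. Qed.
Lemma fval0u c : fval c 0 = 0.
Proof. by rewrite /fval mul0mx mxE. Qed.

Lemma fval0c (u : 'rV[R]_n) : fval 0 u = 0.
Proof. by rewrite /fval mulmx0 mxE. Qed.

Lemma fval_tr (u : 'rV[R]_n) : u != 0 -> 0 < fval u^T u.
Proof.
move=> u0; rewrite /fval mxE.
have ge0 : forall j : 'I_n, 0 <= u 0 j * u^T j 0.
  by move=> j; rewrite mxE -expr2 sqr_ge0.
rewrite lt0r sumr_ge0 ?andbT //; apply: contra u0 => /eqP H.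
have := psumr_eq0P (fun j _ => ge0 j) H => Hj.
apply/eqP/matrixP => i j; rewrite (ord1 i) mxE.
by have /eqP := Hj j isT; rewrite mxE mulf_eq0 orbb => /eqP.
Qed.

Lemma small_eps (s : seq (R * R)) : exists2 e : R, 0 < e &
  forall d, 0 < d -> d <= e -> forall p, p \in s ->
    (0 < p.1 -> 0 < p.1 + d * p.2) /\ (p.1 < 0 -> p.1 + d * p.2 < 0).
Proof.
elim: s => [|[a b] s [e' e'0 He']]; first by exists 1 => //.
have [->|a0] := eqVneq a 0.
  exists e' => // d d0 de p; rewrite inE => /orP[/eqP->/=|ps]; last exact: He'.
  by rewrite ltxx; split.
have pa : 0 < `|a| by rewrite normr_gt0.
have pb : 0 < `|b| + 1 by rewrite ltr_wpDl.
exists (Num.min e' (`|a| / (`|b| + 1))).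
  by rewrite lt_min e'0 divr_gt0.
move=> d d0; rewrite le_min => /andP[de1 de2] p; rewrite inE => /orP[/eqP->/=|ps];
  last exact: He'.
have h1 : d * (`|b| + 1) <= `|a| by rewrite -ler_pdivlMr.
have hb1 : b <= `|b| := ler_norm b.
have hb2 : - `|b| <= b := lerNnormlW (lexx _).
split=> ha.
  have : `|a| = a by rewrite gtr0_norm.
  move=> e; rewrite e in h1; nra.
have : `|a| = - a by rewrite ltr0_norm.
move=> e; rewrite e in h1; nra.
Qed.

Lemma generic (s : seq 'rV[R]_n) :
  exists g : 'cV[R]_n, forall u, u \in s -> u != 0 -> fval g u != 0.
Proof.
elim: s => [|u s [g Hg]]; first by exists 0.
have [u0|un0] := eqVneq u 0.
  exists g => w; rewrite inE => /orP[/eqP->|ws]; first by rewrite u0 eqxx.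
  exact: Hg.
have [gu|gu0] := eqVneq (fval g u) 0; last first.
  by exists g => w; rewrite inE => /orP[/eqP->|ws] //; exact: Hg.
have [e e0 He] := small_eps [seq (fval g w, fval u^T w) | w <- s].
exists (g + e *: u^T) => w; rewrite inE fvalD fvalZ => /orP[/eqP->|ws] w0.
  by rewrite gu add0r mulf_neq0 // gt_eqF // fval_tr.
have /(He e e0 (lexx e)) : (fval g w, fval u^T w) \in
    [seq (fval g w, fval u^T w) | w <- s] by apply: map_f.
move=> /= [H1 H2]; have := Hg w ws w0; rewrite neq_lt => /orP[/H2|/H1].
  by move=> h; rewrite lt_eqF.
by move=> h; rewrite gt_eqF.
Qed.


Definition z0 A U : nat := #|[set i in A | U i == 0]|.

Lemma card_sum A (P : pred I) : #|[set i in A | P i]| = (\sum_(i in A) (P i : nat))%N.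
Proof.
rewrite -sum1_card big_mkcond [RHS]big_mkcond /=; apply: eq_bigr => i _.
by rewrite !inE; case: (i \in A); case: (P i).
Qed.

Lemma card_le A (P : pred I) : (#|[set i in A | P i]| <= #|A|)%N.
Proof. by rewrite card_sum -sum1_card leq_sum // => i _; case: (P i). Qed.

Lemma codeg_le A U c : c != 0 -> (codeg_star A U <= nnonpos c A U)%N.
Proof.
move=> c0; rewrite /codeg_star.
have lt : (nnonpos c A U < #|A|.+1)%N by rewrite ltnS card_le.
pose k0 := Ordinal lt.
have P0 : `[< exists c0, c0 != 0 /\ nnonpos c0 A U = k0 >] by apply/asboolP; exists c.
set F := fun k : 'I_(#|A|.+1) => (k : nat).
have : leq (\big[minn/#|A|]_(k <- index_enum 'I_(#|A|.+1) | `[< exists c0, c0 != 0 /\ nnonpos c0 A U = k >]) F k) (F k0).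
  elim: (index_enum _) (mem_index_enum k0) => // h t IH; rewrite inE big_cons => /orP[/eqP<-|kt].
    by rewrite P0 geq_minl.
  case: ifP => _; last exact: IH.
  exact: leq_trans (geq_minr _ _) (IH kt).
by [].
Qed.

Lemma codeg_le_card A U : (codeg_star A U <= #|A|)%N.
Proof.
rewrite /codeg_star; elim/big_ind: _ => //.
  by move=> x y hx _; exact: leq_trans (geq_minl _ _) hx.
by move=> k _; rewrite -ltnS.
Qed.

Lemma const_neq0 : (0 < n)%N -> (const_mx 1 : 'cV[R]_n) != 0.
Proof.
move=> n0; apply/eqP => /matrixP /(_ (Ordinal n0) 0); rewrite !mxE => /eqP.
by rewrite oner_eq0.
Qed.

Lemma codeg_attained A U : (0 < n)%N ->
  exists2 c, c != 0 & nnonpos c A U = codeg_star A U.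
Proof.
move=> n0.
have : codeg_star A U = #|A| \/ exists2 c, c != 0 & nnonpos c A U = codeg_star A U.
  rewrite /codeg_star; elim/big_ind: _; first by left.
    by move=> x y hx hy; case: (leqP x y).
  by move=> k /asboolP [c [c0 ck]]; right; exists c.
case=> // hA; exists (const_mx 1); first exact: const_neq0.
apply/eqP; rewrite eqn_leq codeg_le ?const_neq0 // andbT hA; exact: card_le.
Qed.

Lemma cV_n0 : n = 0%N -> forall c : 'cV[R]_n, c = 0.
Proof. by move=> hn c; apply/matrixP => i j; have := ltn_ord i; rewrite {2}hn. Qed.

Lemma rV_n0 : n = 0%N -> forall u : 'rV[R]_n, u = 0.
Proof. by move=> hn u; apply/matrixP => i j; have := ltn_ord j; rewrite {2}hn. Qed.

Lemma fval_n0 : n = 0%N -> forall c u, fval c u = 0.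
Proof. by move=> hn c u; rewrite (rV_n0 hn u) fval0u. Qed.

Lemma codeg_n0 A U : n = 0%N -> codeg_star A U = #|A|.
Proof.
move=> hn; rewrite /codeg_star big_pred0 // => k.
by apply/asboolP => -[c [c0 _]]; move: c0; rewrite (cV_n0 hn c) eqxx.
Qed.

Lemma npos_nnonpos A U c : (npos c A U + nnonpos c A U)%N = #|A|.
Proof.
rewrite /npos /nnonpos !card_sum -big_split /= -sum1_card; apply: eq_bigr => i _.
by case: ltrP.
Qed.

Lemma nposN A U c : npos (- c) A U = nneg c A U.
Proof. by rewrite /npos /nneg; apply: eq_card => i; rewrite !inE fvalN oppr_gt0. Qed.
Lemma nnegN A U c : nneg (- c) A U = npos c A U.
Proof. by rewrite /npos /nneg; apply: eq_card => i; rewrite !inE fvalN oppr_lt0. Qed.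

Lemma deg_formula A U :
  deg_star A U = #|A|%:Z - (codeg_star A U)%:Z - (crank A U)%:Z.
Proof.
rewrite /deg_star; case: (posnP n) => hn.
  rewrite big_pred0; last first.
    by move=> k; apply/asboolP => -[c [c0 _]]; move: c0; rewrite (cV_n0 hn c) eqxx.
  rewrite codeg_n0 // subrr.
  have : (crank A U <= n)%N by rewrite /crank rank_leq_col.
  by rewrite {2}hn leqn0 => /eqP ->.
congr (_ - _).
have [c c0 cc] := codeg_attained A U hn.
suff -> : (\max_(k < #|A|.+1 | `[< exists c, c != 0 /\ npos c A U = k >]) (k : nat))
   = (#|A| - codeg_star A U)%N.
  by rewrite subzn // codeg_le_card.
apply/eqP; rewrite eqn_leq; apply/andP; split.
  apply/bigmax_leqP => k /asboolP [c' [c'0 <-]].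
  have := npos_nnonpos A U c'; have := codeg_le A U c' c'0; lia.
have lt : (npos c A U < #|A|.+1)%N by rewrite ltnS card_le.
apply: leq_trans (leq_bigmax_cond (Ordinal lt) _) => /=.
  by have := npos_nnonpos A U c; lia.
by apply/asboolP; exists c.
Qed.

Lemma key A U c : (0 < n)%N -> exists2 c', c' != 0 &
  (2 * nnonpos c' A U <= 2 * nneg c A U + 2 * z0 A U
     + #|[set i in A | (U i != 0%R) && (fval c (U i) == 0%R)]|)%N.
Proof.
move=> n0.
have [g Hg] := generic [seq U i | i <- enum I].
have Hg' : forall i, U i != 0 -> fval g (U i) != 0.
  by move=> i; apply: Hg; apply: map_f; rewrite mem_enum.
set zp := #|[set i in A | _]|.
pose cnt (h : 'cV[R]_n) :=
  \big[addn/0%N]_(i in A) ([&& U i != 0, fval c (U i) == 0 & fval h (U i) < 0] : nat).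
have Hsplit : (cnt g + cnt (-g))%N = zp.
  rewrite /zp card_sum -big_split; apply: eq_bigr => i _ /=; rewrite fvalN oppr_lt0.
  case: (eqVneq (U i) 0) => [->|ui] //=; case: eqP => //= _.
  by have := Hg' i ui; case: (ltrgtP (fval g (U i)) 0).
have [h [Hh1 Hh2]] : exists h : 'cV[R]_n,
    (forall i, U i != 0 -> fval h (U i) != 0) /\ (2 * cnt h <= zp)%N.
  case: (leqP (cnt (-g)) (cnt g)) => hle.
    by exists (-g); split; [move=> i /Hg'; rewrite fvalN oppr_eq0 | lia].
  by exists g; split; [exact: Hg' | lia].
have [e e0 He] := small_eps [seq (fval c (U i), fval h (U i)) | i <- enum A].
have He' : forall i, i \in A ->
    (0 < fval c (U i) -> 0 < fval (c + e *: h) (U i)) /\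
    (fval c (U i) < 0 -> fval (c + e *: h) (U i) < 0).
  move=> i iA; rewrite fvalD fvalZ.
  apply: (He e e0 (lexx e) (fval c (U i), fval h (U i))).
  by apply: map_f; rewrite mem_enum.
have [c'0|c'n0] := eqVneq (c + e *: h) 0.
  exists (const_mx 1); first exact: const_neq0.
  have : z0 A U = #|A|.
    apply/eqP; rewrite eqn_leq card_le /z0 card_sum -sum1_card leq_sum // => i iA.
    case: eqVneq => //= ui; exfalso.
    have [H1 H2] := He' i iA.
    have h3 : fval (c + e *: h) (U i) = 0 by rewrite c'0 fval0c.
    case: (ltrgtP (fval c (U i)) 0) => hc.
    - by have := H2 hc; rewrite h3 ltxx.
    - by have := H1 hc; rewrite h3 ltxx.
    - move: h3; rewrite fvalD fvalZ hc add0r => /eqP; rewrite mulf_eq0.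
      by rewrite gt_eqF //= (negbTE (Hh1 i ui)).
  have := card_le A (fun i => fval (const_mx 1) (U i) <= 0); rewrite /nnonpos; lia.
exists (c + e *: h) => //.
have : (nnonpos (c + e *: h) A U <= nneg c A U + z0 A U + cnt h)%N.
  rewrite /nnonpos /nneg /z0 !card_sum -!big_split /=; apply: leq_sum => i iA.
  case: eqVneq => [->|ui] /=; first by rewrite !fval0u ltxx lexx addn1.
  have [H1 H2] := He' i iA.
  case: (ltrgtP (fval c (U i)) 0) => hc /=.
  - by case: (_ <= 0)%R.
  - by rewrite lt_geF ?H1.
  - rewrite fvalD fvalZ hc add0r pmulr_rle0 // le_eqVlt (negbTE (Hh1 i ui)) /=.
    by [].
lia.
Qed.

Lemma cnt_id A U c :
  (npos c A U + nneg c A U + z0 A U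
     + #|[set i in A | (U i != 0%R) && (fval c (U i) == 0%R)]|)%N = #|A|.
Proof.
rewrite /npos /nneg /z0 !card_sum -!big_split /= -sum1_card; apply: eq_bigr => i _.
case: eqVneq => [->|ui] /=; first by rewrite fval0u ltxx.
by case: (ltrgtP (fval c (U i)) 0).
Qed.

Lemma cnt_ineq A U c :
  (#|A| + z0 A U + nneg c A U <= npos c A U + nnonpos c A U + nnonpos c A U)%N.
Proof.
rewrite /npos /nneg /z0 /nnonpos !card_sum -sum1_card -!big_split /=.
apply: leq_sum => i _.
case: eqVneq => [->|ui] /=; first by rewrite fval0u ltxx lexx.
by case: (ltrgtP (fval c (U i)) 0).
Qed.

Lemma DD_formula A U :
  (DD A U)%:Z = #|A|%:Z + (z0 A U)%:Z - 2 * (codeg_star A U)%:Z.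
Proof.
case: (posnP n) => hn.
  have hz : z0 A U = #|A|.
    by rewrite /z0; apply: eq_card => i; rewrite !inE (rV_n0 hn (U i)) eqxx andbT.
  have hp : forall c, npos c A U = 0%N /\ nneg c A U = 0%N.
    move=> c; rewrite /npos /nneg !card_sum.
    by split; apply: big1 => i _; rewrite fval_n0 // ltxx.
  suff -> : DD A U = 0%N by rewrite codeg_n0 // hz; lia.
  apply/eqP; rewrite -leqn0; apply/bigmax_leqP => k /asboolP [c <-].
  by have [-> ->] := hp c.
set Y := (_ - _)%R.
have L : forall c, (npos c A U)%:Z - (nneg c A U)%:Z <= Y.
  move=> c; have [c' c'0 hc'] := key A U c hn.
  have := codeg_le A U c' c'0; have := cnt_id A U c; rewrite /Y; lia.
have Y0 : 0 <= Y.
  have h1 := L 0; move: h1; rewrite /npos /nneg !card_sum !big1 // => i _;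
  by rewrite fval0c ltxx.
have [c c0 cc] := codeg_attained A U hn.
apply/eqP; rewrite eq_le; apply/andP; split.
  rewrite -(gez0_abs Y0) lez_nat; apply/bigmax_leqP => k /asboolP [c' <-].
  rewrite -lez_nat !abszE (ger0_norm Y0) ler_norml L andbT.
  by have := L (- c'); rewrite nposN nnegN; lia.
have lt : (`|(npos c A U)%:Z - (nneg c A U)%:Z|%N < #|A|.+1)%N.
  rewrite ltnS -lez_nat abszE ler_norml.
  have := cnt_id A U c; lia.
apply: (@le_trans _ _ (`|(npos c A U)%:Z - (nneg c A U)%:Z|%N)%:Z); last first.
  rewrite lez_nat; apply: (leq_bigmax_cond (Ordinal lt)).
  by apply/asboolP; exists c.
rewrite abszE; apply: le_trans (ler_norm _).
have := cnt_ineq A U c; rewrite /Y -cc; lia.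
Qed.

Lemma ker_coker (B : 'M[R]_n) : (kermx (cokermx B) :=: B)%MS.
Proof.
apply/eqmxP/andP; split.
  by rewrite submxE mulmx_ker.
by rewrite sub_kermx mulmx_coker.
Qed.

Lemma crank_add (V : I -> 'rV[R]_n) (S : {set I}) :
  crank [set: I] V = (crank S V + crank (~: S) (quot S V))%N.
Proof.
rewrite /crank /clin.
rewrite (big_setID S) /= setTI setTD.
set B := (\sum_(i in S) <<V i>>)%MS.
set C := (\sum_(i in ~: S) <<V i>>)%MS.
have := mxrank_mul_ker (B + C)%MS (cokermx B).
rewrite (cap_eqmx (eqmx_refl _) (ker_coker B)) (capmx_idPr (addsmxSl B C)).
move=> <-; rewrite addnC; congr (_ + _)%N.
apply/eqmx_rank/eqmxP.
apply: eqmx_trans (addsmxMr _ _ _) _.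
rewrite mulmx_coker.
apply: eqmx_trans (adds0mx _ _) _.
apply: eqmx_trans (sumsmxMr _ _ _) _.
apply: eqmx_sums => i _; rewrite /quot /qmap /clin -/B.
exact: eqmx_trans (eqmxMr _ (genmxE _)) (eqmx_sym (genmxE _)).
Qed.

End Aux.
Arguments z0 {R n I}.
Arguments DD_formula {R n I}.
Arguments deg_formula {R n I}.
Arguments crank_add {R n I}.

Theorem mainTheorem12 (R : realType) (n : nat) (I : finType)
    (V : I -> 'rV[R]_n) (S : {set I})
    (hW : forall i : I, (V i <= clin S V)%MS -> i \in S) :
  let T := [set: I] in
  (DD T V = (DD S V + DD (~: S) (quot S V))%N <->
   deg_star T V = deg_star S V + deg_star (~: S) (quot S V)) /\
  (deg_star T V = deg_star S V + deg_star (~: S) (quot S V) <->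
   codeg_star T V = (codeg_star S V + codeg_star (~: S) (quot S V))%N).
Proof.
move=> T.
have hm : #|T| = (#|S| + #|~: S|)%N by rewrite cardsC cardsT.
have hz1 : z0 T V = z0 S V.
  rewrite /z0; apply: eq_card => i; rewrite !inE /=.
  case: eqVneq => [vi|vi]; rewrite ?andbF ?andbT //; apply/esym/hW; by rewrite vi sub0mx.
have hz2 : z0 (~: S) (quot S V) = 0%N.
  rewrite /z0; apply: eq_card0 => j; rewrite !inE /quot /qmap.
  apply/negP => /andP[jS /eqP h]; move: jS; rewrite (hW j) //.
  by rewrite submxE h.
have hr : crank T V = (crank S V + crank (~: S) (quot S V))%N := crank_add V S.
have d1 := DD_formula T V; have d2 := DD_formula S V; have d3 := DD_formula (~: S) (quot S V).
have e1 := deg_formula T V; have e2 := deg_formula S V; have e3 := deg_formula (~: S) (quot S V).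
move: d1 d2 d3 e1 e2 e3.
set a := DD _ _; set b := DD S _; set c := DD _ (quot _ _).
set p := deg_star _ _; set q := deg_star S _; set r := deg_star _ (quot _ _).
set x := codeg_star _ _; set y := codeg_star S _; set z := codeg_star _ (quot _ _).
move=> d1 d2 d3 e1 e2 e3.
split; split => H; lia.
Show. Qed.
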